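(* Let $\lambda$ be a dominant integral weight of $\mathfrak{sl}_{r+1}$ and let $b\in\mathcal{B}(\lambda+\rho)$. Let $\psi_{\mathbf i}(b)=(a_{i,j})_{1\le j\le i\le r}$ be the BZL path of $b$ with respect to the long word $\mathbf i=(1,2,1,3,2,1,\dots,r,r-1,\dots,2,1)$, written in triangular form, and let $\mathbf a(b)=(\mathbf a_{i,j})_{1\le i\le j\le r}$ be the tableau data of $b$. Then for all $1\le j\le i\le r$, \[ a_{i,j}=\mathbf a_{i-j+1,\,i}, \] i.e. $a_{i,j}$ equals the number of entries equal to $i+1$ lying in rows $1$ through $i-j+1$ of $b$.
   Context: Fix $r\ge1$ and $\mathfrak g=\mathfrak{sl}_{r+1}$ with index set $I=\{1,\dots,r\}$, simple roots $\alpha_1,\dots,\alpha_r$, fundamental weights $\omega_1,\dots,\omega_r$, positive roots $\Phi^+$, $N=|\Phi^+|=r(r+1)/2$, and $\rho=\sum_i\omega_i$. For a dominant integral weight $\mu=\sum_i m_i\omega_i$, the crystal $\mathcal B(\mu)$ is identified (Kashiwara–Nakashima) with the set of semistandard Young tableaux with entries in $\{1,\dots,r+1\}$ of the shape having $m_i$ columns of height $i$. An entry equal to $k$ is called a $k$-box (of color $k$). A tableau is identified with the tensor product $b_1\otimes\cdots\otimes b_m$ of its entries read column by column from the rightmost column to the leftmost, each column from top to bottom. The Kashiwara operators $\tilde e_i,\tilde f_i$ act by the signature rule: for each factor $b_k$ (in order) write $-$ if $b_k=i+1$, $+$ if $b_k=i$, and nothing otherwise; repeatedly cancel adjacent pairs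 $+-$ (a $+$ immediately followed by a $-$); then $\tilde e_i$ changes the factor corresponding to the rightmost remaining $-$ from $i+1$ to $i$ (and $\tilde e_ib=0$ if no $-$ remains), and $\tilde f_i$ changes the factor corresponding to the leftmost remaining $+$ from $i$ to $i+1$ (and $\tilde f_ib=0$ if no $+$ remains). The weight of a tableau is $\sum_k \epsilon_{c_k}$ restricted to $\mathfrak{sl}_{r+1}$, where $c_k$ runs over its entries and $\epsilon_c$ are the standard weights. Fix the long word $\mathbf i=(i_1,\dots,i_N)=(1,2,1,3,2,1,\dots,r,r-1,\dots,2,1)$ of the longest Weyl group element. The BZL path $\psi_{\mathbf i}(b)=(a_1,\dots,a_N)$ is defined inductively: $a_k$ is the maximal integer such that $\tilde e_{i_k}^{a_k}\tilde e_{i_{k-1}}^{a_{k-1}}\cdots\tilde e_{i_1}^{a_1}b\ne0$. It is written in triangular form $(a_{1,1};a_{2,1},a_{2,2};\dots;a_{r,1},\dots,a_{r,r})$, so $a_{i,j}=a_{i(i-1)/2+j}$ and corresponds to the letter $i_{i(i-1)/2+j}=i-j+1$. For a tableau $b\in\mathcal B(\lambda+\rho)$ and $1\le i\le j\le r$, $\mathbf a_{i,j}$ denotes the number of $(j+1)$-boxes in rows $1$ through $i$ of $b$, and $\mathbf a(b)=(\mathbf a_{1,1},\dots,\mathbf a_{1,r};\mathbf a_{2,2},\dots,\mathbf a_{2,r};\dots;\mathbf a_{r,r})$. *)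

(* Defs.v *)
From mathcomp Require Import all_boot.
Set Implicit Arguments. Unset Strict Implicit. Unset Printing Implicit Defensive.

(** Tableaux are given as lists of rows (top row first), entries are nats in
    {1,...,r+1}.  A dominant weight lambda = sum_k l_k omega_k of sl_{r+1} is
    given by its coefficient list l (size r); lambda+rho has m_k = l_k + 1
    columns of height k. *)

(* length of row k (0-indexed) of the shape of lambda+rho:
   number of columns of height > k *)
Definition row_len (l : seq nat) (k : nat) : nat :=
  \sum_(k <= p < size l) (nth 0 l p).+1.

Definition row (t : seq (seq nat)) (k : nat) : seq nat := nth [::] t k.

Definition is_ssyt (r : nat) (l : seq nat) (t : seq (seq nat)) : Prop :=
  [/\ size l = r, size t = r,
      (forall k, k < r -> size (row t k) = row_len l k) &
      [/\ (forall k, k < r -> size (row t k) = row_len l k),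
      (forall k x, k < r -> x \in row t k -> 1 <= x <= r.+1),
      (forall k, k < r -> sorted leq (row t k)) &
      (forall k c, k.+1 < r -> c < size (row t k.+1) ->
         nth 0 (row t k) c < nth 0 (row t k.+1) c)]].

Definition reading (t : seq (seq nat)) : seq nat :=
  flatten [seq [seq nth 0 (row t k) c | k <- iota 0 (size t) & c < size (row t k)]
          | c <- rev (iota 0 (size (row t 0)))].

(** Signature rule. A signature is a list of (position, sign), sign true = '+'. *)
Definition signature (i : nat) (w : seq nat) : seq (nat * bool) :=
  [seq (k, nth 0 w k == i) | k <- iota 0 (size w) &
       (nth 0 w k == i) || (nth 0 w k == i.+1)].

Fixpoint cancel_once (s : seq (nat * bool)) : seq (nat * bool) :=
  match s with
  | (p, true) :: (q, false) :: s' => s'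
  | x :: s' => x :: cancel_once s'
  | [::] => [::]
  end.

Definition reduced_signature (i : nat) (w : seq nat) : seq (nat * bool) :=
  iter (size w) cancel_once (signature i w).

(* Kashiwara operator e_i on words; None stands for 0 *)
Definition kashiwara_e (i : nat) (w : seq nat) : option (seq nat) :=
  let minus := [seq x.1 | x <- reduced_signature i w & ~~ x.2] in
  match minus with
  | [::] => None
  | _ => Some (set_nth 0 w (last 0 minus) i)
  end.

Definition e_iter (i a : nat) (w : seq nat) : option (seq nat) :=
  iter a (fun o => obind (kashiwara_e i) o) (Some w).

(* maximal a with e_i^a w <> 0 (such a is at most the number of letters) *)
Definition e_max (i : nat) (w : seq nat) : nat :=
  \max_(a < (size w).+1 | e_iter i a w != None) (a : nat).

Definition long_word (r : nat) : seq nat :=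
  flatten [seq rev (iota 1 i) | i <- iota 1 r].

Fixpoint bzl_aux (ws : seq nat) (w : seq nat) : seq nat :=
  match ws with
  | [::] => [::]
  | i :: ws' =>
      let a := e_max i w in
      a :: bzl_aux ws' (odflt w (e_iter i a w))
  end.

Definition bzl (r : nat) (w : seq nat) : seq nat := bzl_aux (long_word r) w.

(* a_{i,j} = a_{i(i-1)/2 + j} (1-indexed) *)
Definition bzl_entry (r : nat) (w : seq nat) (i j : nat) : nat :=
  nth 0 (bzl r w) ((i * i.-1)./2 + j).-1.

(* bold a_{i,j}: number of (j+1)-boxes in rows 1..i *)
Definition tab_data (t : seq (seq nat)) (i j : nat) : nat :=
  count (pred1 j.+1) (flatten (take i t)).

Example ex1 : long_word 3 = [:: 1; 2; 1; 3; 2; 1]. Proof. reflexivity. Qed.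
Example ex2 : reading [:: [:: 1; 1; 2]; [:: 2; 3]] = [:: 2; 1; 3; 1; 2]. Proof. reflexivity. Qed.

(* Main.v *)
Require Import Defs.
From mathcomp Require Import all_boot zify.
Set Implicit Arguments. Unset Strict Implicit. Unset Printing Implicit Defensive.

Fixpoint goodB (bs : seq bool) : bool :=
  match bs with
  | [::] => true
  | false :: _ => false
  | true :: false :: r => goodB r
  | true :: r => goodB r
  end.

Lemma goodB_cons bs : goodB bs -> goodB (true :: bs).
Proof. by case: bs => [|[] r]. Qed.

Lemma goodB_cat a b : goodB a -> goodB b -> goodB (a ++ b).
Proof.
move: {2}(size a) (leqnn (size a)) => n; elim: n a => [|n IH] [|x a] //= Ha.
case: x => //; case: a Ha => [|[] a] Ha /=.
- by move=> _ Hb; apply: goodB_cons.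
- by move=> Hg Hb; have := IH (true :: a) Ha Hg Hb.
- move=> Hg Hb; apply: IH => //; rewrite /= in Ha; lia.
Qed.

Definition sgn (k : nat) (w : seq nat) : seq bool :=
  [seq x == k | x <- w & (x == k) || (x == k.+1)].

Lemma sgn_cat k a b : sgn k (a ++ b) = sgn k a ++ sgn k b.
Proof. by rewrite /sgn filter_cat map_cat. Qed.

Lemma signature_snd k w : map snd (signature k w) = sgn k w.
Proof.
rewrite /signature /sgn -map_comp /=.
rewrite -[in RHS](mkseq_nth 0 w) /mkseq filter_map -map_comp.
by apply: eq_map.
Qed.

Definition shiftS (m : nat) (s : seq (nat * bool)) := [seq (x.1 + m, x.2) | x <- s].

Lemma signature_cat k a b :
  signature k (a ++ b) = signature k a ++ shiftS (size a) (signature k b).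
Proof.
rewrite /signature size_cat iotaD add0n filter_cat map_cat; congr (_ ++ _).
  have E : {in iota 0 (size a), nth 0 (a ++ b) =1 nth 0 a}.
    by move=> x; rewrite mem_iota add0n => /andP [_ Hx]; rewrite nth_cat Hx.
  rewrite (@eq_in_filter _ _ (fun n => (nth 0 a n == k) || (nth 0 a n == k.+1))); last first.
    by move=> x /E ->.
  by apply/eq_in_map => x; rewrite mem_filter => /andP [_ /E ->].
rewrite -(addn0 (size a)) iotaDl addn0 filter_map -!map_comp /shiftS -map_comp.
have -> : [seq x <- iota 0 (size b) | preim (addn (size a))
       (fun k0 : nat => (nth 0 (a ++ b) k0 == k) || (nth 0 (a ++ b) k0 == k.+1)) x]
   = [seq x <- iota 0 (size b) | (nth 0 b x == k) || (nth 0 b x == k.+1)].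
  apply: eq_filter => x /=; by rewrite nth_cat ltnNge leq_addr /= addKn.
apply: eq_map => x /=; by rewrite nth_cat ltnNge leq_addr /= addKn addnC.
Qed.

Lemma signature_nil k w : k \notin w -> k.+1 \notin w -> signature k w = [::].
Proof.
move=> H1 H2; rewrite /signature.
have -> : [seq k0 <- iota 0 (size w) | (nth 0 w k0 == k) || (nth 0 w k0 == k.+1)] = [::] => //.
apply/eqP; rewrite -(negbK (_ == _)) -has_filter; apply/hasPn => x.
rewrite mem_iota add0n /= => Hx.
have Hm := mem_nth 0 Hx.
apply/negP => /orP [] /eqP E; rewrite E in Hm; [by rewrite Hm in H1 | by rewrite Hm in H2].
Qed.

Definition negb2 (x : nat * bool) := ~~ x.2.

Lemma cancel_false s1 s2 : all negb2 s1 ->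
  cancel_once (s1 ++ s2) = s1 ++ cancel_once s2.
Proof.
elim: s1 => [|[p b] s1 IH] //= /andP [Hb Hs]; rewrite /negb2 /= in Hb.
by rewrite (negbTE Hb) IH.
Qed.

Lemma cancel_good s : goodB (map snd s) ->
  goodB (map snd (cancel_once s)) /\
  count negb2 (cancel_once s) = (count negb2 s).-1.
Proof.
move: {2}(size s) (leqnn (size s)) => n; elim: n s => [|n IH] [|[p b] s] //= Hs.
case: b => //; case: s Hs => [|[q c] s] Hs //=.
case: c Hs => Hs /= Hg.
  have [H1 H2] := IH ((q, true) :: s) Hs Hg.
  split; first by apply: goodB_cons.
  by rewrite /negb2 /= add0n H2.
by [].
Qed.

Lemma iter_cancel m s1 s2 : all negb2 s1 -> goodB (map snd s2) ->
  count negb2 s2 <= m -> [seq x <- iter m cancel_once (s1 ++ s2) | negb2 x] = s1.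
Proof.
move=> H1; elim: m s2 => [|m IH] s2 Hg Hc.
  rewrite filter_cat (all_filterP H1).
  have -> : [seq x <- s2 | negb2 x] = [::] by apply/eqP; rewrite -size_eq0 size_filter -leqn0.
  by rewrite cats0.
rewrite iterSr cancel_false //.
have [G C] := cancel_good Hg.
apply: IH => //; lia.
Qed.

Lemma map_snd_shift m s : map snd (shiftS m s) = map snd s.
Proof. by rewrite /shiftS -map_comp. Qed.

Lemma size_signature k w : size (signature k w) <= size w.
Proof. by rewrite /signature size_map size_filter (leq_trans (count_size _ _)) // size_iota. Qed.

Lemma all_negb2_sig k U : k \notin U -> all negb2 (signature k U).
Proof.
move=> HU; rewrite /negb2 -(all_map snd (fun b => ~~ b)) signature_snd.
apply/allP => b /mapP [x]; rewrite mem_filter => /andP [_ xU] ->.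
by apply/negP => /eqP E; rewrite -E xU in HU.
Qed.

Lemma set_nth_mid (U R : seq nat) x y : set_nth 0 (U ++ x :: R) (size U) y = U ++ y :: R.
Proof. by elim: U => //= z U ->. Qed.

Lemma ke_step k U V W2 : k \notin U -> k \notin V -> k.+1 \notin V -> goodB (sgn k W2) ->
  kashiwara_e k (U ++ k.+1 :: V ++ W2) = Some (U ++ k :: V ++ W2).
Proof.
move=> HU HV1 HV2 HW.
set w := U ++ _.
have Hsig : signature k w = rcons (signature k U) (size U, false) ++
   shiftS (size U) (shiftS 1 (shiftS (size V) (signature k W2))).
  rewrite /w signature_cat -cat1s signature_cat signature_cat (signature_nil HV1 HV2).
  have -> : signature k [:: k.+1] = [:: (0, false)].
    by rewrite /signature /= eqxx orbT /= eqn_leq ltnn.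
  by rewrite cat_rcons.
have Hred : [seq x <- reduced_signature k w | negb2 x] = rcons (signature k U) (size U, false).
  rewrite /reduced_signature Hsig; apply: iter_cancel.
  - by rewrite -cats1 all_cat all_negb2_sig //= andbT.
  - by rewrite !map_snd_shift signature_snd.
  - apply: leq_trans (count_size _ _) _.
    apply: leq_trans (size_signature k w); rewrite Hsig size_cat; exact: leq_addl.
rewrite /kashiwara_e.
have -> : [seq x.1 | x <- reduced_signature k w & ~~ x.2] = map fst (rcons (signature k U) (size U, false)).
  by rewrite -Hred.
rewrite map_rcons /=.
case E: (map fst (signature k U)) => [|y m] /=.
  by rewrite /w set_nth_mid.
by rewrite last_rcons /w set_nth_mid.
Qed.

Lemma ke_none k W2 : goodB (sgn k W2) -> kashiwara_e k W2 = None.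
Proof.
move=> HW; rewrite /kashiwara_e.
have -> : [seq x <- reduced_signature k W2 | negb2 x] = [::].
  rewrite /reduced_signature -(cat0s (signature k W2)); apply: iter_cancel => //.
  - by rewrite signature_snd.
  - apply: leq_trans (count_size _ _) _; exact: size_signature.
by [].
Qed.

Lemma iter_none i a : iter a (fun o => obind (kashiwara_e i) o) None = None.
Proof. by elim: a => //= a ->. Qed.

Lemma e_iterS i a w : e_iter i a.+1 w =
  if kashiwara_e i w is Some w' then e_iter i a w' else None.
Proof. by rewrite /e_iter iterSr /=; case: kashiwara_e => // ; rewrite iter_none. Qed.

Lemma e_iter_noneD i a d w : e_iter i a w = None -> e_iter i (d + a) w = None.
Proof. by rewrite /e_iter iterD => ->; rewrite iter_none. Qed.

Lemma e_max_eq i w p : e_iter i p w != None -> e_iter i p.+1 w = None ->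
  p <= size w -> e_max i w = p.
Proof.
move=> H1 H2 Hp; rewrite /e_max; apply/eqP; rewrite eqn_leq; apply/andP; split.
  apply/bigmax_leqP => a /= Ha; rewrite leqNgt; apply/negP => Hlt.
  have := e_iter_noneD (a - p.+1) H2; rewrite subnK // => E.
  by rewrite E in Ha.
have Hp' : p < (size w).+1 by [].
by apply: (@leq_bigmax_cond _ _ (fun a : 'I_(size w).+1 => nat_of_ord a) (Ordinal Hp')).
Qed.

Definition flip (k x : nat) := if x == k.+1 then k else x.

Lemma sgn_nil k V : k \notin V -> k.+1 \notin V -> sgn k V = [::].
Proof.
move=> H1 H2; rewrite /sgn.
have -> : [seq x <- V | (x == k) || (x == k.+1)] = [::] => //.
apply/eqP; rewrite -(negbK (_ == _)) -has_filter; apply/hasPn => x xV.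
by apply/negP => /orP [] /eqP E; subst x; [rewrite xV in H1 | rewrite xV in H2].
Qed.

Lemma split_last (x : nat) W : x \in W -> exists U V, W = U ++ x :: V /\ x \notin V.
Proof.
elim/last_ind: W => [|W y IH] //.
rewrite -cats1 mem_cat => /orP [xW|].
  case: (boolP (y == x)) => [/eqP ->|ny].
    by exists W, [::].
  have [U [V [E HV]]] := IH xW.
  exists U, (rcons V y); split; first by rewrite E -cats1 -catA.
  by rewrite mem_rcons in_cons negb_or eq_sym ny.
by rewrite inE => /eqP ->; exists W, [::].
Qed.

Lemma e_iter_main k p : forall W1 W2, k \notin W1 -> goodB (sgn k W2) ->
  count (pred1 k.+1) W1 = p ->
  e_iter k p (W1 ++ W2) = Some (map (flip k) W1 ++ W2) /\
  e_iter k p.+1 (W1 ++ W2) = None.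
Proof.
elim: p => [|p IH] W1 W2 HW1 HW2 Hc.
  have H1 : k.+1 \notin W1 by apply/count_memPn.
  have -> : map (flip k) W1 = W1.
    rewrite -[RHS]map_id; apply/eq_in_map => x xW; rewrite /flip.
    by case: eqP => // E; rewrite -E xW in H1.
  split => //.
  rewrite e_iterS ke_none // sgn_cat (sgn_nil HW1 H1) //.
have : k.+1 \in W1 by rewrite -has_pred1 has_count Hc.
move=> /split_last [U [V [E HV]]]; subst W1.
rewrite mem_cat in_cons negb_or !negb_or in HW1.
move/and3P: HW1 => [HU _ HkV].
rewrite -catA cat_cons.
rewrite e_iterS [e_iter k p.+2 _]e_iterS (ke_step HU HkV HV HW2).
have HU' : count (pred1 k.+1) U = p.
  move: Hc; rewrite count_cat /= eqxx (count_memPn HV); lia.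
have Hg : goodB (sgn k (k :: V ++ W2)).
  rewrite -cat1s !sgn_cat (sgn_nil HkV HV) /=.
  have Ek : sgn k [:: k] = [:: true].
    by rewrite /sgn /= eqxx /= eqxx.
  rewrite Ek.
  exact: goodB_cons.
have [A B] := IH U (k :: V ++ W2) HU Hg HU'.
rewrite A B; split => //.
rewrite map_cat /= /flip eqxx -catA /=.
have -> : [seq (if x == k.+1 then k else x) | x <- V] = V.
  rewrite -[RHS]map_id; apply/eq_in_map => x xV.
  by case: eqP => // E; rewrite -E xV in HV.
by [].
Qed.

Definition vl (t : seq (seq nat)) (p : nat * nat) := nth 0 (row t p.2) p.1.
Definition colP (t : seq (seq nat)) (c : nat) :=
  [seq (c, rho) | rho <- iota 0 (size t) & c < size (row t rho)].
Definition posl t (cs : seq nat) := flatten [seq colP t c | c <- cs].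
Definition word t (g : nat -> nat -> nat) (cs : seq nat) :=
  [seq g p.2 (vl t p) | p <- posl t cs].

Definition F (i k rho x : nat) :=
  if x <= i then rho.+1 else if x == i.+1 then (if rho < k then k.+1 else rho.+1) else x.

Lemma reading_word t : reading t = word t (fun _ x => x) (rev (iota 0 (size (row t 0)))).
Proof.
rewrite /reading /word /posl map_flatten; congr flatten.
rewrite -map_comp; apply: eq_map => c; rewrite /colP /= -map_comp; by apply: eq_map.
Qed.

Lemma word_cat t g a b : word t g (a ++ b) = word t g a ++ word t g b.
Proof. by rewrite /word /posl map_cat flatten_cat map_cat. Qed.

Lemma mem_posl t cs p : p \in posl t cs ->
  [/\ p.1 \in cs, p.2 < size t & p.1 < size (row t p.2)].
Proof.
case/flattenP => s /mapP [c cin ->] /mapP [rho].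
by rewrite mem_filter mem_iota add0n => /andP [H1 /andP [_ H2]] ->.
Qed.

Lemma F_P1 i k rho x : 0 < k -> k <= i -> rho < x ->
  (k.-1 <= rho -> i.+1 + (rho - k.-1) <= x) ->
  [/\ F i k rho x != k, flip k (F i k rho x) = F i k.-1 rho x &
      (F i k rho x == k.+1) = (x == i.+1) && (rho < k)].
Proof.
move=> Hk Hki Hx H.
have H' : (k.-1 <= rho) = false \/ (k.-1 <= rho /\ i.+1 + (rho - k.-1) <= x).
  by case: (leqP k.-1 rho) => h; [right; split => //; exact: H|left].
rewrite /F /flip; case: H' => [h|[h1 h2]]; split;
  repeat (case: ifP => /=); move=> *; try lia; apply/eqP; lia.
Qed.

Lemma F_P2 i k rho x : (rho < k -> x <= i) ->
  F i k rho x = F i k.-1 rho x /\ ((x == i.+1) && (rho < k)) = false.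
Proof.
move=> H; case: (ltnP rho k) => h.
  have := H h => hx; rewrite /F hx; split => //; apply/negbTE; apply/eqP; lia.
rewrite andbF; split => //; rewrite /F; repeat (case: ifP => /=); move=> *; try lia.
Qed.

Lemma F_col i k rho x : 0 < k -> k <= i -> rho < x -> (rho <= k.-1 -> x <= i) ->
  [/\ ((F i k rho x == k) || (F i k rho x == k.+1)) ->
        rho = k.-1 \/ (rho = k /\ (F i k rho x == k) = false),
      rho = k.-1 -> F i k rho x == k & True].
Proof.
move=> Hk Hki Hx H; split => //.
  case: (leqP rho k.-1) => h.
    have hx := H h; rewrite /F hx => /orP [] /eqP E; left; lia.
  rewrite /F; repeat (case: ifP => /=); move=> *; right; split; try lia;
    apply/negbTE; apply/eqP; lia.
move=> E; have hx : x <= i by apply: H; rewrite E.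
by rewrite /F hx E prednK.
Qed.

Definition tab_ok (t : seq (seq nat)) :=
  [/\ (forall rho, size (row t rho.+1) <= size (row t rho)),
      (forall rho, sorted leq (row t rho)),
      (forall rho c, c < size (row t rho.+1) -> nth 0 (row t rho) c < nth 0 (row t rho.+1) c)
    & (forall c, c < size (row t 0) -> 0 < nth 0 (row t 0) c)].

Lemma size_mono t : tab_ok t -> forall rho rho', rho <= rho' ->
  size (row t rho') <= size (row t rho).
Proof.
case=> H1 _ _ _ rho rho' /subnK <-; elim: (rho' - rho) => // d IH.
by rewrite addSn (leq_trans (H1 _)).
Qed.

Lemma col_mono t : tab_ok t -> forall rho rho' c, rho <= rho' -> c < size (row t rho') ->
  nth 0 (row t rho) c + (rho' - rho) <= nth 0 (row t rho') c.
Proof.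
move=> Ht rho rho' c /subnK <-; rewrite addnK.
elim: (rho' - rho) => [|d IH] Hc; first by rewrite addn0.
have Hc' : c < size (row t (d + rho)).
  by apply: leq_trans Hc _; apply: size_mono; rewrite // addSn leqnSn.
have h1 := IH Hc'; case: Ht => _ _ H3 _.
have h2 : nth 0 (row t (d + rho)) c < nth 0 (row t (d.+1 + rho)) c.
  by rewrite addSn; apply: H3; rewrite -addSn.
lia.
Qed.

Lemma ge_row t : tab_ok t -> forall rho c, c < size (row t rho) -> rho < nth 0 (row t rho) c.
Proof.
move=> Ht rho c Hc.
have h1 := col_mono Ht (leq0n rho) Hc.
have h0 : c < size (row t 0) by apply: leq_trans Hc _; apply: size_mono.
case: Ht => _ _ _ H4; have := H4 c h0; lia.
Qed.

Lemma row_mono t : tab_ok t -> forall rho c c', c <= c' -> c' < size (row t rho) ->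
  nth 0 (row t rho) c <= nth 0 (row t rho) c'.
Proof.
case=> _ H2 _ _ rho c c' Hcc Hc'.
apply: (sorted_leq_nth leq_trans leqnn 0 (H2 rho)) => //.
by rewrite inE (leq_ltn_trans Hcc).
Qed.

Lemma filter_iota_none (Q : pred nat) m d : (forall x, m <= x -> ~~ Q x) ->
  [seq x <- iota m d | Q x] = [::].
Proof.
move=> H; apply/eqP; rewrite -(negbK (_ == _)) -has_filter; apply/hasPn => x.
by rewrite mem_iota => /andP [h _]; apply: H.
Qed.

Lemma goodB_col (Q : pred nat) (h : nat -> bool) a n : a < n -> Q a -> h a ->
  (forall rho, Q rho -> rho = a \/ (rho = a.+1 /\ h rho = false)) ->
  goodB [seq h rho | rho <- [seq x <- iota 0 n | Q x]].
Proof.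
move=> Han Qa ha HQ.
have -> : iota 0 n = iota 0 a ++ a :: iota a.+1 (n - a.+1).
  rewrite -{1}(subnKC Han) iotaD add0n -addn1 iotaD add0n -catA /=.
  by rewrite addn1.
rewrite filter_cat.
have -> : [seq x <- iota 0 a | Q x] = [::].
  apply/eqP; rewrite -(negbK (_ == _)) -has_filter; apply/hasPn => x.
  rewrite mem_iota add0n => /andP [_ hx]; apply/negP => /HQ; lia.
rewrite /= Qa /= ha.
case: (n - a.+1) => [|d] //=.
rewrite (@filter_iota_none Q a.+2 d); last first.
  by move=> x hx; apply/negP => /HQ; lia.
case: ifP => // Qa1; case: (HQ _ Qa1) => [|[_ E]]; first lia.
by rewrite /= E.
Qed.

Lemma sgn_flatten k ss : sgn k (flatten ss) = flatten [seq sgn k s | s <- ss].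
Proof. by elim: ss => //= s ss IH; rewrite sgn_cat IH. Qed.

Lemma goodB_flatten bss : all goodB bss -> goodB (flatten bss).
Proof. by elim: bss => //= b bss IH /andP [h1 h2]; apply: goodB_cat => //; apply: IH. Qed.

Lemma count_sum T (a : pred T) s : count a s = \sum_(x <- s) (a x : nat).
Proof. by elim: s => [|x s IH]; rewrite ?big_nil ?big_cons //= IH. Qed.

Lemma posl_cat t a b : posl t (a ++ b) = posl t a ++ posl t b.
Proof. by rewrite /posl map_cat flatten_cat. Qed.

Lemma count_posl t (q : nat -> nat -> bool) :
  (forall rho, size (row t rho) <= size (row t 0)) ->
  count (fun p => q p.2 (vl t p)) (posl t (rev (iota 0 (size (row t 0))))) =
  \sum_(rho <- iota 0 (size t)) count (q rho) (row t rho).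
Proof.
move=> Hsz; set L := size (row t 0).
rewrite /posl count_flatten sumnE !big_map big_rev.
have -> : \sum_(c <- iota 0 L) count (fun p => q p.2 (vl t p)) (colP t c) =
   \sum_(c <- iota 0 L) \sum_(rho <- iota 0 (size t)) ((c < size (row t rho)) && q rho (nth 0 (row t rho) c) : nat).
  apply: eq_bigr => c _; rewrite /colP count_map count_filter count_sum.
  by apply: eq_bigr => rho _; rewrite /= andbC.
rewrite exchange_big; apply: eq_bigr => rho _.
have Hs := Hsz rho.
rewrite /L -(subnKC Hs) iotaD big_cat /= add0n.
rewrite (@big1_seq _ _ _ _ (iota (size (row t rho)) _)); last first.
  move=> c /andP [_]; rewrite mem_iota => /andP [h _]; by rewrite ltnNge h.
rewrite addn0.
rewrite -[in RHS](mkseq_nth 0 (row t rho)) /mkseq count_map count_sum.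
apply: eq_big_seq => c; rewrite mem_iota add0n => /andP [_ ->] //.
Qed.

Lemma step t i k : tab_ok t -> 0 < k -> k <= i -> k <= size t ->
  e_max k (word t (F i k) (rev (iota 0 (size (row t 0))))) =
    count (pred1 i.+1) (flatten (take k t)) /\
  e_iter k (count (pred1 i.+1) (flatten (take k t)))
     (word t (F i k) (rev (iota 0 (size (row t 0))))) =
    Some (word t (F i k.-1) (rev (iota 0 (size (row t 0))))).
Proof.
move=> Ht Hk Hki Hkn.
set L := size (row t 0).
set C := find (fun x => i < x) (row t k.-1).
have HC : C <= size (row t k.-1) by apply: find_size.
have HCL : C <= L by apply: leq_trans HC (size_mono Ht (leq0n _)).
have Esplit : rev (iota 0 L) = rev (iota C (L - C)) ++ rev (iota 0 C).
  by rewrite -rev_cat -{2}(add0n C) -iotaD subnKC.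
have F1 : forall rho c, C <= c -> c < size (row t rho) ->
   rho < nth 0 (row t rho) c /\
   (k.-1 <= rho -> i.+1 + (rho - k.-1) <= nth 0 (row t rho) c).
  move=> rho c Hc Hcs; split; first exact: ge_row.
  move=> Hr.
  have Hc' : c < size (row t k.-1) by apply: leq_trans Hcs _; apply: size_mono.
  have HCs : C < size (row t k.-1) by apply: leq_ltn_trans Hc Hc'.
  have h1 : i < nth 0 (row t k.-1) C.
    by apply: (@nth_find _ 0 (fun x => i < x)); rewrite has_find.
  have h2 := row_mono Ht Hc Hc'.
  have h3 := col_mono Ht Hr Hcs.
  lia.
have F2 : forall rho c, c < C -> c < size (row t rho) ->
   rho < nth 0 (row t rho) c /\ (rho <= k.-1 -> nth 0 (row t rho) c <= i).
  move=> rho c Hc Hcs; split; first exact: ge_row.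
  move=> Hr.
  have Hc' : c < size (row t k.-1) by apply: leq_trans Hc HC.
  have h1 : (i < nth 0 (row t k.-1) c) = false.
    by apply: (@before_find _ 0 (fun x => i < x)).
  have h3 := col_mono Ht Hr Hc'.
  lia.
have P1 : forall p, p \in posl t (rev (iota C (L - C))) ->
   [/\ F i k p.2 (vl t p) != k, flip k (F i k p.2 (vl t p)) = F i k.-1 p.2 (vl t p) &
      (F i k p.2 (vl t p) == k.+1) = (vl t p == i.+1) && (p.2 < k)].
  move=> p /mem_posl [H1 H2 H3].
  rewrite mem_rev mem_iota in H1; case/andP: H1 => H1 _.
  have [h1 h2] := F1 _ _ H1 H3.
  exact: F_P1.
have P2 : forall p, p \in posl t (rev (iota 0 C)) ->
   F i k p.2 (vl t p) = F i k.-1 p.2 (vl t p) /\ ((vl t p == i.+1) && (p.2 < k)) = false.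
  move=> p /mem_posl [H1 H2 H3].
  rewrite mem_rev mem_iota add0n in H1; case/andP: H1 => _ H1.
  have [h1 h2] := F2 _ _ H1 H3.
  apply: F_P2 => h; apply: h2; lia.
rewrite Esplit !word_cat.
set W1 := word t (F i k) (rev (iota C (L - C))).
set W2 := word t (F i k) (rev (iota 0 C)).
have HW1 : k \notin W1.
  apply/mapP => [[p pin E]]; have [h _ _] := P1 p pin.
  by rewrite -E eqxx in h.
have HW2 : goodB (sgn k W2).
  rewrite /W2 /word /posl map_flatten sgn_flatten; apply: goodB_flatten.
  apply/allP => bs /mapP [s /mapP [s' /mapP [c cin ->] ->] ->].
  rewrite mem_rev mem_iota add0n in cin; case/andP: cin => _ cin.
  set y := fun rho => F i k rho (nth 0 (row t rho) c).
  set Q := fun rho => (c < size (row t rho)) && ((y rho == k) || (y rho == k.+1)).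
  have -> : sgn k [seq F i k p.2 (vl t p) | p <- colP t c] =
            [seq y rho == k | rho <- [seq x <- iota 0 (size t) | Q x]].
    rewrite /sgn /colP -map_comp filter_map -map_comp -filter_predI.
    congr map; apply: eq_filter => rho; by rewrite /Q /= andbC.
  have Hk1 : k.-1 < size t by lia.
  have Hck : c < size (row t k.-1) by apply: leq_trans cin HC.
  have Fc : forall rho, c < size (row t rho) ->
     [/\ ((y rho == k) || (y rho == k.+1)) -> rho = k.-1 \/ (rho = k /\ (y rho == k) = false),
      rho = k.-1 -> y rho == k & True].
    move=> rho h; have [h1 h2] := F2 rho c cin h; exact: F_col.
  have Hy : y k.-1 == k by have [_ h _] := Fc _ Hck; apply: h.
  apply: (goodB_col (a := k.-1)) => //.
  - by rewrite /Q Hck Hy.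
  - move=> rho /andP [h1 h2]; have [h _ _] := Fc _ h1.
    by rewrite prednK //; apply: h.
have Hcnt : count (pred1 k.+1) W1 = count (pred1 i.+1) (flatten (take k t)).
  set q := fun rho x => (x == i.+1) && (rho < k).
  have E1 : count (pred1 k.+1) W1 = count (fun p => q p.2 (vl t p)) (posl t (rev (iota C (L - C)))).
    rewrite /W1 /word count_map; apply: eq_in_count => p pin /=.
    by have [_ _ E] := P1 p pin; rewrite /q -E.
  have E2 : count (fun p => q p.2 (vl t p)) (posl t (rev (iota 0 C))) = 0.
    rewrite (@eq_in_count _ _ pred0); first by rewrite count_pred0.
    by move=> p pin /=; have [_ E] := P2 p pin; rewrite /q E.
  rewrite E1 -[LHS]addn0 -E2 -count_cat -posl_cat -Esplit count_posl; last first.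
    by move=> rho; apply: size_mono.
  rewrite count_flatten sumnE big_map.
  have Et : take k t = [seq row t rho | rho <- iota 0 k].
    by rewrite -{1}(mkseq_nth [::] t) /mkseq -map_take take_iota (minn_idPl Hkn).
  rewrite Et big_map -(subnKC Hkn) iotaD big_cat /= add0n.
  rewrite (@big1_seq _ _ _ _ (iota k _)); last first.
    move=> rho /andP [_]; rewrite mem_iota => /andP [h _].
    rewrite (@eq_count _ _ pred0) ?count_pred0 // => x; rewrite /q /=.
    by rewrite ltnNge h andbF.
  rewrite addn0; apply: eq_big_seq => rho; rewrite mem_iota add0n => /andP [_ h].
  by apply: eq_count => x; rewrite /q h andbT.
have [A B] := e_iter_main HW1 HW2 Hcnt.
have Hmax : e_max k (W1 ++ W2) = count (pred1 i.+1) (flatten (take k t)).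
  apply: e_max_eq; rewrite ?A ?B //.
  by rewrite -Hcnt size_cat (leq_trans (count_size _ _)) // leq_addr.
split => //.
rewrite A; congr Some; congr (_ ++ _).
  rewrite /W1 /word -map_comp; apply/eq_in_map => p pin /=.
  by have [_ -> _] := P1 p pin.
rewrite /W2 /word; apply/eq_in_map => p pin /=.
by have [-> _] := P2 p pin.
Qed.

Definition cnt t i k := count (pred1 i.+1) (flatten (take k t)).
Definition RR t := rev (iota 0 (size (row t 0))).

Lemma rev_iotaS k : rev (iota 1 k.+1) = k.+1 :: rev (iota 1 k).
Proof. by rewrite -[k.+1]addn1 iotaD rev_cat /= addnC. Qed.

Lemma block t i : tab_ok t -> i <= size t -> forall k, k <= i -> forall rest,
  bzl_aux (rev (iota 1 k) ++ rest) (word t (F i k) (RR t)) =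
  [seq cnt t i k' | k' <- rev (iota 1 k)] ++ bzl_aux rest (word t (F i 0) (RR t)).
Proof.
move=> Ht Hi; elim=> [|k IH] Hk rest //.
rewrite rev_iotaS /=.
have [E1 E2] := step Ht (ltn0Sn k) Hk (leq_trans Hk Hi).
rewrite /RR E1 E2 /=; congr (_ :: _).
exact: IH (ltnW Hk) rest.
Qed.

Lemma F_shift s rho x : rho < x -> F s 0 rho x = F s.+1 s.+1 rho x.
Proof. move=> h; rewrite /F; repeat (case: ifP => /=); move=> *; lia. Qed.

Lemma F_base rho x : rho < x -> F 1 1 rho x = x.
Proof. move=> h; rewrite /F; repeat (case: ifP => /=); move=> *; lia. Qed.

Lemma stage t : tab_ok t -> forall m s, 0 < s -> s + m <= (size t).+1 ->
  bzl_aux (flatten [seq rev (iota 1 i) | i <- iota s m]) (word t (F s s) (RR t)) =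
  flatten [seq [seq cnt t i k | k <- rev (iota 1 i)] | i <- iota s m].
Proof.
move=> Ht; elim=> [|m IH] s Hs Hsm //.
rewrite /= block //; last by lia.
congr (_ ++ _).
have -> : word t (F s 0) (RR t) = word t (F s.+1 s.+1) (RR t).
  apply/eq_in_map => p /mem_posl [_ _ h].
  by apply: F_shift; apply: ge_row.
apply: IH => //; lia.
Qed.

Lemma sumn_iota1 n : (sumn (iota 1 n)).*2 = n.+1 * n.
Proof.
elim: n => // n IH.
rewrite -[n.+1]addn1 iotaD sumn_cat /= doubleD IH; lia.
Qed.

Lemma tab_ok_of r l t : is_ssyt r l t -> tab_ok t.
Proof.
case=> Hl Ht Hsz [_ Hr Hs Hc].
have Hrl : forall k, row_len l k.+1 <= row_len l k.
  move=> k; rewrite /row_len; case: (ltnP k (size l)) => h.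
    by rewrite (big_ltn h) leq_addl.
  by rewrite !big_geq //; apply: leq_trans h _.
have Hnil : forall k, r <= k -> row t k = [::].
  by move=> k h; rewrite /row nth_default // Ht.
split.
- move=> rho; case: (ltnP rho.+1 r) => h.
    by rewrite !Hsz //; apply: ltnW.
  by rewrite Hnil.
- move=> rho; case: (ltnP rho r) => h; first exact: Hs.
  by rewrite Hnil.
- move=> rho c; case: (ltnP rho.+1 r) => h; first exact: Hc.
  by rewrite Hnil.
- move=> c hc.
  have h0 : 0 < r by rewrite lt0n; apply/eqP => E; rewrite Hnil ?E // in hc.
  by have /andP [] := Hr 0 _ h0 (mem_nth 0 hc).
Qed.

Theorem mainTheorem1 (r : nat) (l : seq nat) (t : seq (seq nat)) :
  1 <= r -> is_ssyt r l t ->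
  forall i j, 1 <= j -> j <= i -> i <= r ->
    bzl_entry r (reading t) i j = tab_data t (i - j + 1) i.
Proof.
move=> Hr Hss i j Hj Hji Hir.
have Ht := tab_ok_of Hss.
have Hsz : size t = r by case: Hss.
have Hread : reading t = word t (F 1 1) (RR t).
  rewrite reading_word; apply/eq_in_map => p /mem_posl [_ _ h] /=.
  by rewrite F_base //; apply: ge_row.
rewrite /bzl_entry /bzl Hread /long_word.
rewrite (@stage t Ht r 1) //; last by rewrite Hsz add1n.
have Eio : iota 1 r = iota 1 i.-1 ++ i :: iota i.+1 (r - i).
  rewrite {1}(_ : r = i.-1 + (r - i).+1); last lia.
  by rewrite iotaD /= add1n prednK //; lia.
set G := fun i' => [seq cnt t i' k | k <- rev (iota 1 i')].
have HS : size (flatten [seq G i' | i' <- iota 1 i.-1]) = (i * i.-1)./2.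
  rewrite size_flatten /shape -map_comp.
  have -> : [seq (size \o G) i' | i' <- iota 1 i.-1] = iota 1 i.-1.
    rewrite -[RHS]map_id; apply: eq_map => x.
    by rewrite /= /G size_map size_rev size_iota.
  by rewrite -{2}(prednK (leq_trans Hj Hji)) -sumn_iota1 half_double.
rewrite Eio map_cat flatten_cat /= nth_cat HS.
have -> : ((i * i.-1)./2 + j).-1 = (i * i.-1)./2 + j.-1 by lia.
rewrite ltnNge leq_addr /= addKn nth_cat /G size_map size_rev size_iota.
have Hj1 : j.-1 < i by lia.
rewrite Hj1 (nth_map 0) ?size_rev ?size_iota // nth_rev ?size_iota //.
rewrite nth_iota; last lia.
rewrite /cnt /tab_data; congr (count _ (flatten (take _ t))); lia.
Qed.
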